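(* Let $\Delta$ be a finite set and $P$ a shift-invariant probability measure on $\Delta^{\mathbb Z}$. Fix any version $\omega\mapsto P(X_{\mathbb N}\in\cdot\mid X_{-\mathbb N_0})(\omega)$ of the conditional distribution of the future given the past, and call the elements of its image the causal states. Then the process dimension $\dim(P)$ is at most the number of causal states (allowing the value $\infty$); equivalently, $\log\dim(P)$ is bounded above by the topological statistical complexity, the logarithm of the number of causal states.
   Context: $X_k$ is the $k$-th coordinate projection on $\Delta^{\mathbb Z}$, $X_{\mathbb N}=(X_1,X_2,\dots)$ the future and $X_{-\mathbb N_0}=(\dots,X_{-1},X_0)$ the past. $\sigma$ is the left shift on $\Delta^{\mathbb N}$; for $d_1,\dots,d_n\in\Delta$, $[d_1,\dots,d_n]$ is the cylinder set of sequences starting with $d_1,\dots,d_n$, and for a finite signed measure $\mu$ on $\Delta^{\mathbb N}$, $\tau_{d_1\cdots d_n}(\mu)(B)=\mu([d_1,\dots,d_n]\cap\sigma^{-n}(B))$ (empty word: $\tau(\mu)=\mu$). With $P_{\mathbb N}=P\circ X_{\mathbb N}^{-1}$, the canonical OOM vector space is $V_P=\operatorname{span}\{\tau_w(P_{\mathbb N}): w \text{ finite word over }\Delta\}$ and the process dimension is $\dim(P)=\dim(V_P)$. *)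

(* Defs.v *)
From HB Require Import structures.
From mathcomp Require Import all_boot all_order all_algebra.
From mathcomp Require Import all_classical all_reals all_analysis.
From mathcomp Require Import measurable_realfun.
Unset Printing Implicit Defensive.
Import Order.TTheory GRing.Theory Num.Theory.
Local Open Scope classical_set_scope.
Local Open Scope ring_scope.

(* The future space Delta^N is indexed by nat: index 0 corresponds to X_1.
   d0 is an arbitrary point of Delta, used only to equip the sequence
   spaces with the pointedType structure MathComp-Analysis requires of a
   measurable space (it does not enter any definition below). *)
Definition seqZ {Delta : finType} (d0 : Delta) : Type := int -> Delta.
Definition seqN {Delta : finType} (d0 : Delta) : Type := nat -> Delta.
HB.instance Definition _ {Delta : finType} (d0 : Delta) :=
  Choice.on (seqZ d0).
HB.instance Definition _ {Delta : finType} (d0 : Delta) :=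
  isPointed.Build (seqZ d0) (fun=> d0).
HB.instance Definition _ {Delta : finType} (d0 : Delta) :=
  Choice.on (seqN d0).
HB.instance Definition _ {Delta : finType} (d0 : Delta) :=
  isPointed.Build (seqN d0) (fun=> d0).

Definition cylZ {Delta : finType} (d0 : Delta) : set (set (seqZ d0)) :=
  [set A | exists (k : int) (d : Delta), A = [set w | w k = d]].
(* generators of the sigma-algebra of the past X_{-N_0} = (..., X_{-1}, X_0) *)
Definition cylPast {Delta : finType} (d0 : Delta) : set (set (seqZ d0)) :=
  [set A | exists (k : int) (d : Delta), (k <= 0)%R /\ A = [set w | w k = d]].
Definition cylN {Delta : finType} (d0 : Delta) : set (set (seqN d0)) :=
  [set A | exists (k : nat) (d : Delta), A = [set x | x k = d]].

Definition OmegaZ {Delta : finType} (d0 : Delta) := g_sigma_algebraType (cylZ d0).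
Definition FutN {Delta : finType} (d0 : Delta) := g_sigma_algebraType (cylN d0).

Section Process.
Context {R : realType} {Delta : finType} {d0 : Delta}.
Local Notation Omega := (OmegaZ d0).
Local Notation Fut := (FutN d0).

Definition shiftZ (w : Omega) : Omega := fun k => w (k + 1)%R.

Definition shift_invariant (P : probability Omega R) : Prop :=
  forall A : set Omega, measurable A -> P (shiftZ @^-1` A) = P A.

Definition futureX (w : Omega) : Fut := fun n => w (n.+1)%:Z.

Definition pastMeas : set (set Omega) := <<s cylPast d0 >>.

Definition cond_dist_future_given_past (P : probability Omega R)
    (kappa : Omega -> probability Fut R) : Prop :=
  (forall B : set Fut, measurable B ->
     forall Y : set (\bar R), measurable Y ->
       pastMeas ((fun w => kappa w B) @^-1` Y)) /\
  (forall (A : set Omega) (B : set Fut), pastMeas A -> measurable B ->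
     P (A `&` futureX @^-1` B) = (\int[P]_(w in A) kappa w B)%E).

(* The causal states are the elements of the image of kappa (measures on
   Delta^N, i.e. identified when they agree on all measurable sets).
   "There are at most n causal states". *)
Definition causal_states_atmost (kappa : Omega -> probability Fut R) (n : nat)
  : Prop :=
  exists rep : 'I_n -> Omega, forall w : Omega, exists i : 'I_n,
    forall B : set Fut, measurable B -> kappa w B = kappa (rep i) B.

Definition cylinder (s : seq Delta) : set Fut :=
  [set x | forall i, (i < size s)%N -> x i = nth d0 s i].

Definition shiftN_pre (n : nat) (B : set Fut) : set Fut :=
  [set x | B (fun k => x (k + n)%N)].

Definition P_N (P : probability Omega R) (B : set Fut) : R :=
  fine (P (futureX @^-1` B)).

Definition tau (P : probability Omega R) (s : seq Delta) (B : set Fut) : R :=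
  P_N P (cylinder s `&` shiftN_pre (size s) B).

(* Finite signed measures on Delta^N are represented as real functions on
   sets; only their values on measurable sets matter. *)
Definition in_VP (P : probability Omega R) (g : set Fut -> R) : Prop :=
  exists s : seq (R * seq Delta), forall B : set Fut, measurable B ->
    g B = \sum_(p <- s) p.1 * tau P p.2 B.

Definition lin_indep {m : nat} (f : 'I_m -> set Fut -> R) : Prop :=
  forall c : 'I_m -> R,
    (forall B : set Fut, measurable B -> \sum_(i < m) c i * f i B = 0) ->
    forall i, c i = 0.

(* dim(P) = dim(V_P) <= n : every linearly independent family in V_P has
   at most n elements *)
Definition process_dim_atmost (P : probability Omega R) (n : nat) : Prop :=
  forall (m : nat) (f : 'I_m -> set Fut -> R),
    (forall i, in_VP P (f i)) -> lin_indep f -> (m <= n)%N.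

End Process.

(* Main.v *)
Require Import Defs.
Set Warnings "-all".
From HB Require Import structures.
From mathcomp Require Import all_boot all_order all_algebra.
From mathcomp Require Import all_classical all_reals all_analysis.
From mathcomp Require Import measurable_realfun.
Import Order.TTheory GRing.Theory Num.Theory.
Local Open Scope classical_set_scope.
Local Open Scope ring_scope.
Lemma meas_fin_all (d : measure_display) (T : measurableType d) (I : finType)
  (P : pred I) (F : I -> set T) :
  (forall i, P i -> measurable (F i)) ->
  measurable [set x | forall i, P i -> F i x].
Proof.
move=> mF.
suff H : forall s : seq I, measurable [set x | forall i, i \in s -> P i -> F i x].
  have -> : [set x | forall i, P i -> F i x] =
            [set x | forall i, i \in enum I -> P i -> F i x].
    by apply/seteqP; split=> x /= h i; [move=> _|]; apply: h; rewrite ?mem_enum.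
  exact: H.
elim=> [|a s IH].
  have -> : [set x | forall i, i \in [::] -> P i -> F i x] = setT.
    by apply/seteqP; split=> x //= _ i; rewrite in_nil.
  exact: measurableT.
have -> : [set x | forall i, i \in a :: s -> P i -> F i x] =
   (if P a then F a else setT) `&` [set x | forall i, i \in s -> P i -> F i x].
  apply/seteqP; split=> x /=.
    move=> h; split; last by move=> i hs; apply: h; rewrite in_cons hs orbT.
    by case: ifP => // Pa; apply: h => //; rewrite mem_head.
  case=> h1 h2 i; rewrite in_cons => /orP [/eqP -> | hs]; last exact: h2.
  by move=> Pa; move: h1; rewrite Pa.
apply: measurableI => //; case: ifP => Pa; [exact: mF | exact: measurableT].
Qed.
Lemma dim_bound (R : fieldType) (T : Type) (M : T -> Prop) (n m : nat)
  (g : 'I_n -> T -> R) (f : 'I_m -> T -> R) :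
  (forall k, exists a : 'I_n -> R, forall B, M B -> f k B = \sum_(i < n) a i * g i B) ->
  (forall c : 'I_m -> R, (forall B, M B -> \sum_(k < m) c k * f k B = 0) ->
     forall k, c k = 0) -> (m <= n)%N.
Proof.
move=> hf hind.
have [a ha] := choice hf.
rewrite leqNgt; apply/negP => hnm.
pose A : 'M[R]_(m, n) := \matrix_(k, i) a k i.
have : kermx A != 0.
  rewrite kermx_eq0 /row_free; apply/negP => /eqP hr.
  by move: (rank_leq_col A); rewrite hr leqNgt hnm.
case/matrix0Pn => i [j hij].
pose c := fun k => kermx A i k.
have hc : forall B, M B -> \sum_(k < m) c k * f k B = 0.
  move=> B MB.
  under eq_bigr => k _ do rewrite (ha k B MB) big_distrr.
  rewrite exchange_big /=.
  apply: big1 => l _.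
  have := congr1 (fun X : 'M[R]_(m, n) => X i l) (mulmx_ker A).
  rewrite !mxE => h0.
  have h1 : \sum_(k < m) c k * a k l = 0.
    rewrite -[RHS]h0. apply: eq_bigr => k _; rewrite /c; congr (_ * _); by rewrite /A mxE.
  rewrite (eq_bigr (fun k => (c k * a k l) * g l B)); last by move=> k _; rewrite mulrA.
  by rewrite -big_distrl /= h1 mul0r.
by move: hij; have := hind c hc j; rewrite /c => ->; rewrite eqxx.
Qed.
Section Main.
Context {R : realType} {Delta : finType} {d0 : Delta}.
Local Notation Omega := (OmegaZ d0).
Local Notation Fut := (FutN d0).

Lemma mfutureX : measurable_fun setT (@futureX Delta d0).
Proof.
apply: (@measurability _ _ Omega Fut setT futureX (cylN d0)) => //.
move=> _ [_ [k [d ->]] <-].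
apply: sub_sigma_algebra; exists (k.+1)%:Z, d; rewrite setTI //.
Qed.

Lemma mshiftZ : measurable_fun setT (@shiftZ Delta d0).
Proof.
apply: (@measurability _ _ Omega Omega setT shiftZ (cylZ d0)) => //.
move=> _ [_ [k [d ->]] <-].
apply: sub_sigma_algebra; exists (k + 1)%R, d; rewrite setTI //.
Qed.

Lemma mpre {d' d''} {T : measurableType d'} {U : measurableType d''} (f : T -> U) (B : set U) :
  measurable_fun setT f -> measurable B -> measurable (f @^-1` B).
Proof. by move=> mf mB; have := mf measurableT B mB; rewrite setTI. Qed.

Lemma past_meas {A : set Omega} : pastMeas A -> measurable A.
Proof.
apply: sub_sigma_algebra2.
move=> B [k [d [_ ->]]]. by exists k, d.
Qed.

Lemma pastI (A B : set Omega) :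
  pastMeas A -> pastMeas B -> pastMeas (A `&` B).
Proof.
move=> hA hB.
exact: (@measurableI _ (g_sigma_algebraType (cylPast d0)) A B hA hB).
Qed.

Lemma iter_shift k (w : Omega) : iter k shiftZ w = (fun j => w (j + k%:Z)%R) :> (int -> Delta).
Proof.
elim: k => [|k IH] /=; first by apply: funext => j; rewrite addr0.
rewrite IH /shiftZ; apply: funext => j /=.
by rewrite -addrA -addn1 PoszD (addrC 1%R).
Qed.

Lemma shift_iter (P : probability Omega R) k (E : set Omega) :
  shift_invariant P -> measurable E ->
  P ((iter k shiftZ) @^-1` E) = P E.
Proof.
move=> hP; elim: k E => [|k IH] E mE //=.
have -> : (fun w => shiftZ (iter k shiftZ w)) @^-1` E = iter k shiftZ @^-1` (shiftZ @^-1` E) by [].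
rewrite IH; first exact: hP.
exact: mpre mshiftZ mE.
Qed.

Context (P : probability Omega R) (kappa : Omega -> probability Fut R)
  (hcond : cond_dist_future_given_past P kappa)
  (n : nat) (rep : 'I_n -> Omega)
  (hrep : forall w : Omega, exists i : 'I_n,
    forall B : set Fut, measurable B -> kappa w B = kappa (rep i) B).

Definition eqv (i j : 'I_n) := forall B : set Fut, measurable B ->
  kappa (rep i) B = kappa (rep j) B.

Lemma sep_ex : exists Bs : 'I_n -> 'I_n -> set Fut, forall i j,
  measurable (Bs i j) /\ (eqv i j \/ kappa (rep i) (Bs i j) <> kappa (rep j) (Bs i j)).
Proof.
have h : forall ij : 'I_n * 'I_n, exists B : set Fut,
    measurable B /\ (eqv ij.1 ij.2 \/ kappa (rep ij.1) B <> kappa (rep ij.2) B).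
  move=> [i j] /=.
  case: (pselect (exists B : set Fut, measurable B /\ kappa (rep i) B <> kappa (rep j) B)).
    by move=> [B [mB hB]]; exists B; split => //; right.
  move=> hno; exists setT; split; first exact: measurableT.
  left => B mB; apply: contrapT => hne; apply: hno; by exists B.
have [Bs hBs] := choice h.
by exists (fun i j => Bs (i, j)) => i j; exact: (hBs (i, j)).
Qed.

Context (Bs : 'I_n -> 'I_n -> set Fut)
  (hBs : forall i j, measurable (Bs i j) /\
     (eqv i j \/ kappa (rep i) (Bs i j) <> kappa (rep j) (Bs i j))).

Definition Tcl (j : 'I_n) : set Omega :=
  [set w | forall i, kappa w (Bs i j) = kappa (rep j) (Bs i j)].

Lemma Tcl_iff j w : Tcl j w <-> forall B, measurable B -> kappa w B = kappa (rep j) B.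
Proof.
split; last by move=> h i; apply: h; case: (hBs i j).
move=> hT; have [t ht] := hrep w.
case: (hBs t j) => mB [heq | hne].
  by move=> B mB'; rewrite ht // heq.
by exfalso; apply: hne; rewrite -ht //; exact: hT.
Qed.

Lemma Tcl_past j : pastMeas (Tcl j).
Proof.
suff : pastMeas [set w | forall i, predT i ->
   ((fun w => kappa w (Bs i j)) @^-1` [set kappa (rep j) (Bs i j)]) w].
  congr pastMeas; apply/seteqP; split => w /= h i //; exact: h.
apply: (@meas_fin_all _ (g_sigma_algebraType (cylPast d0))) => i _.
exact: (hcond.1 _ (hBs i j).1 _ (emeasurable_set1 _)).
Qed.

Definition Ccl (j : 'I_n) : set Omega :=
  [set w | Tcl j w /\ forall i : 'I_n, (i < j)%N -> ~ Tcl i w].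

Lemma Ccl_past j : pastMeas (Ccl j).
Proof.
have -> : Ccl j = Tcl j `&` [set w | forall i : 'I_n, (i < j)%N -> (~` Tcl i) w] by [].
apply: pastI; first exact: Tcl_past.
apply: (@meas_fin_all _ (g_sigma_algebraType (cylPast d0))) => i _.
exact: (@measurableC _ (g_sigma_algebraType (cylPast d0))) (Tcl_past i).
Qed.

Lemma Ccl_ex w : exists j, Ccl j w.
Proof.
have [t ht] := hrep w; have hT : Tcl t w by apply/Tcl_iff.
suff H : forall m (t : 'I_n), (t < m)%N -> Tcl t w -> exists j, Ccl j w.
  exact: (H t.+1 t (ltnSn _) hT).
elim=> [|m IH] t' // ht' hT'.
case: (pselect (exists i : 'I_n, (i < t')%N /\ Tcl i w)).
  move=> [i [hi hTi]]; apply: (IH i) => //; exact: leq_trans hi ht'.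
move=> hno; exists t'; split => // i hi hTi; apply: hno; by exists i.
Qed.

Lemma Ccl_uniq w j j' : Ccl j w -> Ccl j' w -> j = j'.
Proof.
move=> [hj hlt] [hj' hlt'].
case: (ltngtP j j') => h.
- by exfalso; exact: hlt' j h hj.
- by exfalso; exact: hlt j' h hj'.
- exact: val_inj.
Qed.

Lemma point_sum w B : measurable B ->
  kappa w B = (\sum_(j < n) (\1_(Ccl j) w)%:E * kappa (rep j) B)%E.
Proof.
move=> mB; have [j0 hj0] := Ccl_ex w.
rewrite (bigD1 j0) //= big1 ?adde0.
  rewrite indicE mem_set //= mul1e.
  by have := (Tcl_iff j0 w).1 hj0.1; apply.
move=> j hj; rewrite indicE memNset ?mul0e //.
by move=> hc; move/eqP: hj; apply; exact: Ccl_uniq hc hj0.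
Qed.

Lemma key A B : pastMeas A -> measurable B ->
  P (A `&` futureX @^-1` B) = (\sum_(j < n) P (Ccl j `&` A) * kappa (rep j) B)%E.
Proof.
move=> hA mB; rewrite (hcond.2 _ _ hA mB).
rewrite (eq_integral (fun w => \sum_(j < n) (\1_(Ccl j) w)%:E * kappa (rep j) B)%E);
  last by move=> w _; exact: point_sum.
have mA := past_meas hA.
have mC : forall j, measurable (Ccl j) by move=> j; exact: past_meas (Ccl_past j).
have mind : forall j, measurable_fun A (fun w => (\1_(Ccl j) w)%:E : \bar R).
  by move=> j; apply/measurable_EFinP; apply: measurable_indic.
have pind : forall j w, A w -> (0 <= (\1_(Ccl j) w)%:E :> \bar R)%E.
  by move=> j w _; rewrite lee_fin indicE.
have mprod : forall j, measurable_fun A (fun w => (\1_(Ccl j) w)%:E * kappa (rep j) B)%E.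
  by move=> j; apply: emeasurable_funM; [exact: mind | exact: measurable_cst].
have pprod : forall j w, A w -> (0 <= (\1_(Ccl j) w)%:E * kappa (rep j) B)%E.
  by move=> j w Aw; rewrite mule_ge0 // pind.
rewrite (ge0_integral_sum _ mA mprod pprod).
apply: eq_bigr => j _.
rewrite (ge0_integralZr _ mA (mind j) (pind j)) //.
by rewrite integral_indic.
Qed.

Definition Aset (s : seq Delta) : set Omega :=
  [set w | forall i, (i < size s)%N -> w ((i.+1)%:Z - (size s)%:Z)%R = nth d0 s i].

Lemma Aset_past s : pastMeas (Aset s).
Proof.
suff : pastMeas [set w | forall i : 'I_(size s), predT i ->
    [set w : Omega | w ((i.+1)%:Z - (size s)%:Z)%R = nth d0 s i] w].
  congr pastMeas; apply/seteqP; split => w /= h i.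
  - by move=> hi; exact: (h (Ordinal hi)).
  - by move=> _; exact: h.
apply: (@meas_fin_all _ (g_sigma_algebraType (cylPast d0))) => i _.
apply: sub_sigma_algebra; exists ((i.+1)%:Z - (size s)%:Z)%R, (nth d0 s i); split => //.
by rewrite subr_le0 lez_nat.
Qed.

Lemma pre_eq s (B : set Fut) : futureX @^-1` (cylinder s `&` shiftN_pre (size s) B) =
  iter (size s) shiftZ @^-1` (Aset s `&` futureX @^-1` B).
Proof.
have h1 : forall w : Omega, (fun k => w (((k + size s).+1)%:Z)) =
    (fun j => w ((j.+1)%:Z + (size s)%:Z)%R).
  by move=> w; apply: funext => k; rewrite -PoszD addSn.
apply/seteqP; split => w /=; rewrite /preimage /= iter_shift /=.
- move=> [hc hB]; split.
    by move=> i hi; rewrite subrK; exact: hc.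
  by move: hB; rewrite /shiftN_pre /futureX /= h1.
- move=> [hc hB]; split.
    by move=> i hi; have := hc i hi; rewrite subrK.
  by rewrite /shiftN_pre /futureX /= h1.
Qed.

Context (hP : shift_invariant P).

Lemma tau_span s : exists a : 'I_n -> R, forall B, measurable B ->
  tau P s B = \sum_(j < n) a j * fine (kappa (rep j) B).
Proof.
exists (fun j => fine (P (Ccl j `&` Aset s))) => B mB.
rewrite /tau /P_N pre_eq shift_iter //; last first.
  apply: measurableI; [exact: past_meas (Aset_past s) | exact: mpre mfutureX mB].
rewrite key //; last exact: Aset_past.
rewrite -sum_fine; last first.
  move=> j _; apply: fin_numM; apply: fin_num_measure => //.
  apply: measurableI; [exact: past_meas (Ccl_past j) | exact: past_meas (Aset_past s)].
apply: eq_bigr => j _; rewrite fineM //; apply: fin_num_measure => //.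
apply: measurableI; [exact: past_meas (Ccl_past j) | exact: past_meas (Aset_past s)].
Qed.
End Main.

Theorem mainTheorem2 (R : realType) (Delta : finType) (d0 : Delta)
    (P : probability (OmegaZ d0) R) :
  shift_invariant P ->
  forall kappa : OmegaZ d0 -> probability (FutN d0) R,
    cond_dist_future_given_past P kappa ->
    forall n : nat, causal_states_atmost kappa n ->
      process_dim_atmost P n.
Proof.
move=> hP kappa hcond n [rep hrep] m f hf hind.
have [Bs hBs] := sep_ex kappa n rep.
have hts := tau_span P kappa hcond n rep hrep Bs hBs hP.
have [a ha] := choice hts.
apply: (@dim_bound R (set (FutN d0)) measurable n m
  (fun j B => fine (kappa (rep j) B)) f) => //.
move=> k; have [s hs] := hf k.
exists (fun j => \sum_(p <- s) p.1 * a p.2 j) => B mB.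
rewrite hs //.
under eq_bigr => p _ do rewrite ha // big_distrr.
rewrite exchange_big /=; apply: eq_bigr => j _.
by rewrite big_distrl /=; apply: eq_bigr => p _; rewrite mulrA.
Qed.
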